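(* Let $\mathbf{k}$ be algebraically closed of characteristic $2$. Let $G=Sp(V,\langle,\rangle)$ (resp. $G=SO(V,Q)$) and let $V=V_1\oplus V_2$ with $V_1,V_2$ mutually orthogonal, so that the restrictions of $\langle,\rangle$ (resp. $Q$) to $V_1,V_2$ are nondegenerate; let $G_j=Sp(V_j)$ (resp. $SO(V_j,Q|_{V_j})$) with Lie algebra $\mathfrak g_j$, and regard $\mathfrak g_1^*\oplus\mathfrak g_2^*\subset\mathfrak g^*$ as in the context. If $\xi_1,\eta_1\in\mathcal N_{\mathfrak g_1^*}$ and $\xi_2,\eta_2\in\mathcal N_{\mathfrak g_2^*}$ satisfy $\mathrm{cl}_{G_1}(\xi_1)\le\mathrm{cl}_{G_1}(\eta_1)$ and $\mathrm{cl}_{G_2}(\xi_2)\le\mathrm{cl}_{G_2}(\eta_2)$, then $\mathrm{cl}_G(\xi_1+\xi_2)\le\mathrm{cl}_G(\eta_1+\eta_2)$.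
   Context: $\mathrm{cl}_H(\xi)$ denotes the coadjoint orbit; $\mathrm c\le\mathrm c'$ means $\mathrm c\subset\overline{\mathrm c'}$. $\mathcal N_{\mathfrak h^*}$ is the set of elements vanishing on the Lie algebra of some Borel subgroup. In the symplectic case, $\mathfrak g^*$ is identified with the space of quadratic forms on $V$ via $\xi\mapsto\alpha_\xi$, $\alpha_\xi(v)=\langle v,Xv\rangle$ where $\xi(x)=\mathrm{tr}(Xx)$ for $x\in\mathfrak{sp}(V)$; in the orthogonal case (with $\beta$ the bilinear form of $Q$, $\mathfrak o(V,Q)=\{x:\beta(xv,v)=0\ \forall v,\ x|_{\mathrm{Rad}\beta}=0\}$), $\mathfrak g^*$ is identified with the space of symplectic (alternating) forms on $V$ via $\xi\mapsto\beta_\xi$, $\beta_\xi(v,w)=\beta(Xv,w)-\beta(v,Xw)$. The inclusion $\mathfrak g_1^*\oplus\mathfrak g_2^*\subset\mathfrak g^*$ sends $(\xi_1,\xi_2)$ to the element whose form is the orthogonal direct sum of the forms of $\xi_1$ on $V_1$ and $\xi_2$ on $V_2$. *)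

(* Defs.v *)
From HB Require Import structures.
From mathcomp Require Import all_boot all_order all_algebra.
Set Implicit Arguments. Unset Strict Implicit. Unset Printing Implicit Defensive.
Import GRing.Theory.
Local Open Scope ring_scope.

Section Zariski.
Variables (k : fieldType) (T : Type) (C : (T -> k) -> Prop).

Inductive polyfun : (T -> k) -> Prop :=
  | PFcoord f : C f -> polyfun f
  | PFconst c : polyfun (fun _ => c)
  | PFadd f g : polyfun f -> polyfun g -> polyfun (fun t => f t + g t)
  | PFmul f g : polyfun f -> polyfun g -> polyfun (fun t => f t * g t).

Definition zclosure (S : T -> Prop) (t : T) : Prop :=
  forall f, polyfun f -> (forall s, S s -> f s = 0) -> f t = 0.

Definition zclosed (S : T -> Prop) : Prop := forall t, zclosure S t -> S t.

Definition zconnected (S : T -> Prop) : Prop :=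
  forall Z1 Z2 : T -> Prop, zclosed Z1 -> zclosed Z2 ->
    (forall t, S t -> Z1 t \/ Z2 t) -> (forall t, S t -> Z1 t -> Z2 t -> False) ->
    (forall t, S t -> Z1 t) \/ (forall t, S t -> Z2 t).
End Zariski.

Section MatrixGroups.
Variables (k : fieldType) (n : nat).
Local Notation M := 'M[k]_n.

Definition mx_coord (f : M -> k) : Prop := exists i j, forall A, f A = A i j.

Definition mxsubgroup (H : M -> Prop) : Prop :=
  [/\ H 1%:M, (forall a, H a -> a \in unitmx),
      (forall a b, H a -> H b -> H (a *m b)) & (forall a, H a -> H (invmx a))].

Definition closed_in_GL (H : M -> Prop) : Prop :=
  forall a, a \in unitmx -> zclosure mx_coord H a -> H a.

Definition gen_subgroup (S : M -> Prop) (a : M) : Prop :=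
  forall K, mxsubgroup K -> (forall s, S s -> K s) -> K a.

Definition derived (H : M -> Prop) : M -> Prop :=
  gen_subgroup (fun c => exists a b, [/\ H a, H b &
                  c = a *m b *m invmx a *m invmx b]).

Definition solvable_mx (H : M -> Prop) : Prop :=
  exists m, forall a, iter m derived H a -> a = 1%:M.

Definition borel (G B : M -> Prop) : Prop :=
  [/\ (forall a, B a -> G a), mxsubgroup B, closed_in_GL B,
      zconnected mx_coord B & solvable_mx B] /\
      (forall B', (forall a, B' a -> G a) -> mxsubgroup B' -> closed_in_GL B' ->
         zconnected mx_coord B' -> solvable_mx B' ->
         (forall a, B a -> B' a) -> forall a, B' a -> B a).

Definition identity_component (H : M -> Prop) (a : M) : Prop :=
  exists S : M -> Prop,
    [/\ (forall b, S b -> H b), zconnected mx_coord S, S 1%:M & S a].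

(* Lie algebra = tangent space at 1: x such that df_1(x) = 0 for every
   polynomial function f vanishing on H (the linear coefficient of
   t |-> f(1 + t x) vanishes) *)
Definition lie (H : M -> Prop) (x : M) : Prop :=
  forall f, polyfun mx_coord f -> (forall a, H a -> f a = 0) ->
    exists p : {poly k}, (forall t, f (1%:M + t *: x) = p.[t]) /\ p`_1 = 0.

(* elements of g^* are represented by functions 'M_n -> k, only their values
   on g matter *)
Definition is_dual (g : M -> Prop) (xi : M -> k) : Prop :=
  forall a x y, g x -> g y -> xi (a *: x + y) = a * xi x + xi y.

Definition dual_coord (g : M -> Prop) (f : (M -> k) -> k) : Prop :=
  exists x, g x /\ forall xi, f xi = xi x.

Definition coorbit (G g : M -> Prop) (xi eta : M -> k) : Prop :=
  exists h, G h /\ forall x, g x -> eta x = xi (invmx h *m x *m h).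

Definition orbit_le (G g : M -> Prop) (xi eta : M -> k) : Prop :=
  forall zeta, coorbit G g xi zeta -> zclosure (dual_coord g) (coorbit G g eta) zeta.

Definition nilcone (G g : M -> Prop) (xi : M -> k) : Prop :=
  is_dual g xi /\ exists B, borel G B /\ forall x, lie B x -> xi x = 0.

Definition represents (g : M -> Prop) (xi : M -> k) (X : M) : Prop :=
  forall x, g x -> xi x = \tr (X *m x).

Definition bform (J : M) (v w : 'cV[k]_n) : k := (v^T *m J *m w) 0 0.

Definition symp_nondeg (J : M) : Prop :=
  (forall v, bform J v v = 0) /\ (forall v, (forall w, bform J v w = 0) -> v = 0).

Definition Sp (J : M) (a : M) : Prop :=
  a \in unitmx /\ forall v w, bform J (a *m v) (a *m w) = bform J v w.

Definition qform_of (J X : M) (v : 'cV[k]_n) : k := bform J v (X *m v).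

Definition Qf (A : M) (v : 'cV[k]_n) : k := (v^T *m A *m v) 0 0.
Definition polar (A : M) (v w : 'cV[k]_n) : k := Qf A (v + w) - Qf A v - Qf A w.
Definition radb (A : M) (v : 'cV[k]_n) : Prop := forall w, polar A v w = 0.
Definition quad_nondeg (A : M) : Prop :=
  forall v, radb A v -> Qf A v = 0 -> v = 0.

Definition Ogrp (A : M) (a : M) : Prop :=
  a \in unitmx /\ forall v, Qf A (a *m v) = Qf A v.
Definition SOgrp (A : M) : M -> Prop := identity_component (Ogrp A).

Definition o_lie (A : M) (x : M) : Prop :=
  (forall v, polar A (x *m v) v = 0) /\ (forall v, radb A v -> x *m v = 0).

Definition altform_of (A X : M) (v w : 'cV[k]_n) : k :=
  polar A (X *m v) w - polar A v (X *m w).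
End MatrixGroups.

Section Embed.
Variables (k : fieldType) (n1 n2 : nat).

Definition sp_embed (J1 : 'M[k]_n1) (J2 : 'M[k]_n2)
    (xi1 : 'M[k]_n1 -> k) (xi2 : 'M[k]_n2 -> k) (xi : 'M[k]_(n1 + n2) -> k) :=
  exists X1 X2 X, [/\ represents (lie (Sp J1)) xi1 X1,
    represents (lie (Sp J2)) xi2 X2,
    represents (lie (Sp (block_mx J1 0 0 J2))) xi X &
    forall v1 v2, qform_of (block_mx J1 0 0 J2) X (col_mx v1 v2)
                  = qform_of J1 X1 v1 + qform_of J2 X2 v2].

Definition o_embed (A1 : 'M[k]_n1) (A2 : 'M[k]_n2)
    (xi1 : 'M[k]_n1 -> k) (xi2 : 'M[k]_n2 -> k) (xi : 'M[k]_(n1 + n2) -> k) :=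
  exists X1 X2 X, [/\ represents (o_lie A1) xi1 X1,
    represents (o_lie A2) xi2 X2,
    represents (o_lie (block_mx A1 0 0 A2)) xi X &
    forall v1 v2 w1 w2,
      altform_of (block_mx A1 0 0 A2) X (col_mx v1 v2) (col_mx w1 w2)
      = altform_of A1 X1 v1 w1 + altform_of A2 X2 v2 w2].
End Embed.

(* Main.v *)
Require Import Defs.
From HB Require Import structures.
From mathcomp Require Import all_boot all_order all_algebra.
Import GRing.Theory.
Local Open Scope ring_scope.
From mathcomp Require Import ring.
From Stdlib Require Import FunctionalExtensionality.
Set Implicit Arguments. Unset Strict Implicit. Unset Printing Implicit Defensive.


Section Gen.
Variable k : fieldType.

Lemma pf_comp (T T' : Type) (C : (T -> k) -> Prop) (C' : (T' -> k) -> Prop)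
  (phi : T' -> T) :
  (forall c, C c -> polyfun C' (fun t => c (phi t))) ->
  forall f, polyfun C f -> polyfun C' (fun t => f (phi t)).
Proof.
move=> hC f; elim=> {f}.
- by move=> f /hC.
- by move=> c; apply: PFconst.
- by move=> f g _ hf _ hg; apply: PFadd.
- by move=> f g _ hf _ hg; apply: PFmul.
Qed.

Lemma pf_eq (T : Type) (C : (T -> k) -> Prop) f f' :
  polyfun C f -> (forall t, f t = f' t) -> polyfun C f'.
Proof. by move=> pf e; have <- : f = f' by apply: functional_extensionality. Qed.

Lemma pf_ext n (g : 'M[k]_n -> Prop) f : polyfun (dual_coord g) f ->
  forall z z', (forall x, g x -> z x = z' x) -> f z = f z'.
Proof.
elim=> {f}.
- by move=> f [x [gx fx]] z z' hz; rewrite !fx hz.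
- by [].
- by move=> f h _ hf _ hh z z' e; rewrite (hf z z') // (hh z z').
- by move=> f h _ hf _ hh z z' e; rewrite (hf z z') // (hh z z').
Qed.

Lemma invmx_mul n (a b : 'M[k]_n) : a \in unitmx -> b \in unitmx ->
  invmx (a *m b) = invmx b *m invmx a.
Proof.
move=> ua ub.
have uab : a *m b \in unitmx by rewrite unitmx_mul ua ub.
have e : invmx b *m invmx a *m (a *m b) = 1%:M.
  by rewrite -mulmxA (mulKmx ua) mulVmx.
by rewrite -[LHS]mul1mx -e -mulmxA mulmxV ?mulmx1.
Qed.

Lemma conj_block n1 n2 (h1 : 'M[k]_n1) (h2 : 'M[k]_n2) (x : 'M[k]_(n1 + n2)) :
  h1 \in unitmx -> h2 \in unitmx ->
  ulsubmx (invmx (block_mx h1 0 0 h2) *m x *m block_mx h1 0 0 h2)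
    = invmx h1 *m ulsubmx x *m h1 /\
  drsubmx (invmx (block_mx h1 0 0 h2) *m x *m block_mx h1 0 0 h2)
    = invmx h2 *m drsubmx x *m h2.
Proof.
move=> u1 u2.
rewrite invmx_block_diag ?block_diag_mx_unit ?u1 ?u2 //.
rewrite -[x]submxK !mulmx_block !block_mxKul !block_mxKdr.
by rewrite !mul0mx !mulmx0 !addr0 !add0r.
Qed.

Lemma generic n1 n2 (G g : 'M[k]_(n1+n2) -> Prop) (G1 g1 : 'M[k]_n1 -> Prop)
  (G2 g2 : 'M[k]_n2 -> Prop) xi eta xi1 eta1 xi2 eta2 :
 G 1%:M -> (forall a b, G a -> G b -> G (a *m b)) -> (forall a, G a -> a \in unitmx) ->
 G1 1%:M -> G2 1%:M -> (forall a, G1 a -> a \in unitmx) -> (forall a, G2 a -> a \in unitmx) ->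
 (forall h x, G h -> g x -> g (invmx h *m x *m h)) ->
 (forall h1 h2, G1 h1 -> G2 h2 -> G (block_mx h1 0 0 h2)) ->
 (forall x, g x -> g1 (ulsubmx x) /\ g2 (drsubmx x)) ->
 (forall x, g x -> xi x = xi1 (ulsubmx x) + xi2 (drsubmx x)) ->
 (forall x, g x -> eta x = eta1 (ulsubmx x) + eta2 (drsubmx x)) ->
 orbit_le G1 g1 xi1 eta1 -> orbit_le G2 g2 xi2 eta2 -> orbit_le G g xi eta.
Proof.
move=> G1m Gmul Gu G11 G21 G1u G2u gAd Gblk gsub exi eeta le1 le2.
move=> zeta [h [Gh hz]] f pf fvan.
pose T (z : 'M[k]_(n1+n2) -> k) := fun x => z (invmx h *m x *m h).
have pfT : polyfun (dual_coord g) (fun z => f (T z)).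
  apply: (pf_comp _ pf) => c [x [gx cx]].
  apply: PFcoord; exists (invmx h *m x *m h); split; first exact: gAd.
  by move=> z /=; rewrite cx.
rewrite (pf_ext pf (z' := T xi) hz).
pose F z := f (T z).
have Fvan : forall s, coorbit G g eta s -> F s = 0.
  move=> s [h' [Gh' hs]]; apply: fvan.
  exists (h *m h'); split; first exact: Gmul.
  move=> x gx; rewrite /T hs; last exact: gAd.
  by rewrite invmx_mul ?Gu // !mulmxA.
pose E (z1 : 'M[k]_n1 -> k) (z2 : 'M[k]_n2 -> k) :=
  fun x : 'M[k]_(n1+n2) => z1 (ulsubmx x) + z2 (drsubmx x).
have pfE1 : forall z2, polyfun (dual_coord g1) (fun z1 => F (E z1 z2)).
  move=> z2; apply: (pf_comp _ pfT) => c [x [gx cx]].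
  apply: (pf_eq (f := fun t => (fun z1 => z1 (ulsubmx x)) t + (fun _ => z2 (drsubmx x)) t)).
    apply: PFadd; last exact: PFconst.
    by apply: PFcoord; exists (ulsubmx x); split => //; case: (gsub x gx).
  by move=> t /=; rewrite cx.
have pfE2 : forall z1, polyfun (dual_coord g2) (fun z2 => F (E z1 z2)).
  move=> z1; apply: (pf_comp _ pfT) => c [x [gx cx]].
  apply: (pf_eq (f := fun t => (fun _ => z1 (ulsubmx x)) t + (fun z2 => z2 (drsubmx x)) t)).
    apply: PFadd; first exact: PFconst.
    by apply: PFcoord; exists (drsubmx x); split => //; case: (gsub x gx).
  by move=> t /=; rewrite cx.
change (F xi = 0).
have -> : F xi = F (E xi1 xi2) by apply: (pf_ext pfT).
have stepA : forall s1 s2, coorbit G1 g1 eta1 s1 -> coorbit G2 g2 eta2 s2 ->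
    F (E s1 s2) = 0.
  move=> s1 s2 [h1 [G1h hs1]] [h2 [G2h hs2]]; apply: Fvan.
  exists (block_mx h1 0 0 h2); split; first exact: Gblk.
  move=> x gx; have [g1x g2x] := gsub x gx.
  rewrite /E hs1 // hs2 // eeta; last by apply: gAd => //; exact: Gblk.
  by have [-> ->] := conj_block x (G1u _ G1h) (G2u _ G2h).
have stepB : forall s2, coorbit G2 g2 eta2 s2 -> F (E xi1 s2) = 0.
  move=> s2 hs2.
  have cx : coorbit G1 g1 xi1 xi1.
    by exists 1%:M; split => // x _; rewrite invmx1 mul1mx mulmx1.
  apply: (le1 xi1 cx (fun z1 => F (E z1 s2)) (pfE1 s2)).
  by move=> s1 hs1; apply: stepA.
have cx : coorbit G2 g2 xi2 xi2.
  by exists 1%:M; split => // x _; rewrite invmx1 mul1mx mulmx1.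
exact: (le2 xi2 cx (fun z2 => F (E xi1 z2)) (pfE2 xi1) stepB).
Qed.
End Gen.


Section Alg.
Variable k : fieldType.
Hypothesis hchar : 2%N \in [pchar k].

Lemma add2 (x : k) : x + x = 0.
Proof. by rewrite -mulr2n -mulr_natr (pcharf0 hchar) mulr0. Qed.

Lemma oppr_c2 (x : k) : - x = x.
Proof. by apply/eqP; rewrite eq_sym -addr_eq0 add2. Qed.

Definition bf m n (M : 'M[k]_(m,n)) (u : 'cV[k]_m) (w : 'cV[k]_n) : k := (u^T *m M *m w) 0 0.

Lemma bfDm m n (M M' : 'M[k]_(m,n)) u w : bf (M + M') u w = bf M u w + bf M' u w.
Proof. by rewrite /bf mulmxDr mulmxDl mxE. Qed.

Lemma bfNm m n (M : 'M[k]_(m,n)) u w : bf (- M) u w = - bf M u w.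
Proof. by rewrite /bf mulmxN mulNmx mxE. Qed.

Lemma bfBm m n (M M' : 'M[k]_(m,n)) u w : bf (M - M') u w = bf M u w - bf M' u w.
Proof. by rewrite bfDm bfNm. Qed.

Lemma bfDl m n (M : 'M[k]_(m,n)) u u' w : bf M (u + u') w = bf M u w + bf M u' w.
Proof. by rewrite /bf linearD /= !mulmxDl mxE. Qed.

Lemma bfDr m n (M : 'M[k]_(m,n)) u w w' : bf M u (w + w') = bf M u w + bf M u w'.
Proof. by rewrite /bf mulmxDr mxE. Qed.

Lemma bf_tr m n (M : 'M[k]_(m,n)) u w : bf M^T u w = bf M w u.
Proof.
rewrite /bf; transitivity ((w^T *m M *m u)^T 0 0); last by rewrite mxE.
by rewrite !trmx_mul trmxK mulmxA.
Qed.

Lemma bf_mul m n m' n' (M : 'M[k]_(m,n)) (a : 'M[k]_(m,m')) (b : 'M[k]_(n,n')) u w :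
  bf M (a *m u) (b *m w) = bf (a^T *m M *m b) u w.
Proof. by rewrite /bf trmx_mul !mulmxA. Qed.

Lemma bf_delta m n (M : 'M[k]_(m,n)) i j :
  bf M (delta_mx i 0) (delta_mx j 0) = M i j.
Proof.
rewrite /bf trmx_delta -rowE -colE.
by rewrite !mxE.
Qed.

Lemma bf_eq0 m n (M : 'M[k]_(m,n)) : (forall u w, bf M u w = 0) -> M = 0.
Proof. by move=> h; apply/matrixP => i j; rewrite -bf_delta h mxE. Qed.

Lemma bf_block n1 n2 m1 m2 (M1 : 'M[k]_(m1,n1)) M2 M3 (M4 : 'M[k]_(m2,n2)) u1 u2 w1 w2 :
  bf (block_mx M1 M2 M3 M4) (col_mx u1 u2) (col_mx w1 w2) =
  bf M1 u1 w1 + bf M2 u1 w2 + bf M3 u2 w1 + bf M4 u2 w2.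
Proof.
rewrite /bf tr_col_mx mul_row_block mul_row_col !mulmxDl.
rewrite !mxE; set a := \sum_j _; set b := \sum_j _; set c := \sum_j _; set d := \sum_j _.
by rewrite -!addrA; congr (_ + _); rewrite !addrA; congr (_ + _); rewrite addrC.
Qed.

Lemma alt_entries n (N : 'M[k]_n) : (forall v, bf N v v = 0) ->
  (forall i, N i i = 0) /\ (forall i j, N j i = N i j).
Proof.
move=> h; have d : forall i, N i i = 0 by move=> i; rewrite -bf_delta h.
split => // i j.
have := h (delta_mx i 0 + delta_mx j 0).
rewrite !bfDl !bfDr !bf_delta !d add0r addr0 => /eqP.
by rewrite addr_eq0 => /eqP ->; rewrite oppr_c2.
Qed.

Lemma tr_sym_alt n (P N : 'M[k]_n) : P^T = P -> (forall v, bf N v v = 0) ->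
  \tr (P *m N) = 0.
Proof.
move=> sP aN; have [d s] := alt_entries aN.
pose L := \matrix_(i, j) if (j < i)%N then N i j else 0.
have -> : N = L + L^T.
  apply/matrixP => i j; rewrite !mxE.
  case: (ltngtP j i) => [ji|ij|e].
  - by rewrite addr0.
  - by rewrite add0r s.
  - have -> : j = i by apply: val_inj.
    by rewrite d addr0.
rewrite mulmxDr mxtraceD.
rewrite -[\tr (P *m L^T)]mxtrace_tr trmx_mul trmxK sP mxtrace_mulC.
exact: add2.
Qed.

Lemma tr_o n (B D x : 'M[k]_n) : B^T = B -> B *m D = D^T *m B ->
  (forall v, bf (x^T *m B) v v = 0) -> x *m cokermx B = 0 -> \tr (D *m x) = 0.
Proof.
move=> sB hD ax xc.
have xB : (x <= B)%MS by rewrite submxE xc.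
have [E BEB] : exists E, B *m E *m B = B.
  by exists (pinvmx B); exact: mulmxKpV (submx_refl B).
have [y ex] := submxP xB.
have [M eM] : exists M, M = B *m D by exists (B *m D).
have sM : M^T = M by rewrite eM trmx_mul sB hD.
have BEM : B *m E *m M = M by rewrite eM mulmxA BEB.
have MEB : M *m E^T *m B = M.
  transitivity ((B *m E *m M)^T); last by rewrite BEM sM.
  by rewrite !trmx_mul sM sB mulmxA.
have hM : M = B *m (E *m M *m E^T) *m B.
  by rewrite !mulmxA BEM MEB.
rewrite ex mxtrace_mulC -mulmxA -eM hM.
rewrite (mxtrace_mulC y) -!mulmxA (mxtrace_mulC B) -!mulmxA.
have -> : E *m (M *m (E^T *m (B *m (y *m B)))) = (E *m M *m E^T) *m (B *m (y *m B)).
  by rewrite !mulmxA.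
apply: tr_sym_alt.
  by rewrite !trmx_mul trmxK sM mulmxA.
move=> v; rewrite -bf_tr.
suff -> : (B *m (y *m B))^T = x^T *m B by apply: ax.
by rewrite ex !trmx_mul sB ?mulmxA.
Qed.

Lemma bf0m m n (u : 'cV[k]_m) (w : 'cV[k]_n) : bf 0 u w = 0.
Proof. by rewrite /bf mulmx0 mul0mx mxE. Qed.

End Alg.


Section Lie.
Variable k : closedFieldType.

Lemma poly_zero (p : {poly k}) : (forall t, p.[t] = 0) -> p = 0.
Proof.
move=> h; apply/eqP; apply/negP => /negP /closed_nonrootP [t].
by rewrite /root h eqxx.
Qed.

Lemma pf_big (T I : Type) (C : (T -> k) -> Prop) (r : seq I) (P : pred I)
  (F : I -> T -> k) : (forall i, polyfun C (F i)) ->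
  polyfun C (fun t => \sum_(i <- r | P i) F i t).
Proof.
move=> hF; elim: r => [|a r IH].
  by apply: (pf_eq (PFconst C 0)) => t; rewrite big_nil.
case Pa: (P a).
  apply: (pf_eq (PFadd (hF a) IH)) => t; by rewrite big_cons Pa.
by apply: (pf_eq IH) => t; rewrite big_cons Pa.
Qed.

Lemma pf_coord n (i j : 'I_n) : polyfun (@mx_coord k n) (fun a => a i j).
Proof. by apply: PFcoord; exists i, j. Qed.

Lemma pf_lmul n m (g : 'M[k]_(m, n)) i j :
  polyfun (@mx_coord k n) (fun a => (g *m a) i j).
Proof.
apply: (pf_eq (f := fun a : 'M[k]_n => \sum_(l < n) (fun a : 'M[k]_n => g i l) a * a l j)).
  by apply: pf_big => l; apply: PFmul; [apply: PFconst | apply: pf_coord].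
by move=> a; rewrite !mxE.
Qed.

Lemma pf_conj m n p (P : 'M[k]_(m, n)) (Q : 'M[k]_(n, p)) i j :
  polyfun (@mx_coord k n) (fun a => (P *m a *m Q) i j).
Proof.
apply: (pf_eq (f := fun a : 'M[k]_n => \sum_(l < n) (P *m a) i l * (fun _ : 'M[k]_n => Q l j) a)).
  by apply: pf_big => l; apply: PFmul; [apply: pf_lmul | apply: PFconst].
by move=> a; rewrite !mxE.
Qed.

Lemma pf_quad n (J : 'M[k]_n) i j :
  polyfun (@mx_coord k n) (fun a => (a^T *m J *m a) i j).
Proof.
apply: (pf_eq (f := fun a : 'M[k]_n => \sum_(l < n)
   (\sum_(m < n) a m i * (fun _ : 'M[k]_n => J m l) a) * a l j)).
  apply: pf_big => l; apply: PFmul; last exact: pf_coord.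
  by apply: pf_big => m; apply: PFmul; [apply: pf_coord | apply: PFconst].
by move=> a; rewrite !mxE; apply: eq_bigr => l _; rewrite !mxE;
  congr (_ * _); apply: eq_bigr => m _; rewrite mxE.
Qed.

Lemma pf_deriv n (f : 'M[k]_n -> k) : polyfun (@mx_coord k n) f ->
  exists d : 'M[k]_n -> k, (forall c x y, d (c *: x + y) = c * d x + d y) /\
    forall x, exists p : {poly k}, (forall t, f (1%:M + t *: x) = p.[t]) /\ p`_1 = d x.
Proof.
elim=> {f}.
- move=> f [i [j fe]].
  exists (fun x => x i j); split.
    by move=> c x y; rewrite !mxE.
  move=> x; exists (((1%:M : 'M[k]_n) i j)%:P + x i j *: 'X); split.
    by move=> t; rewrite fe hornerD hornerC hornerZ hornerX !mxE mulrC.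
  by rewrite coefD coefC coefZ coefX /= add0r mulr1.
- move=> c; exists (fun _ => 0); split; first by move=> *; rewrite mulr0 addr0.
  by move=> x; exists c%:P; split; [move=> t; rewrite hornerC | rewrite coefC].
- move=> f g _ [df [dfl dfp]] _ [dg [dgl dgp]].
  exists (fun x => df x + dg x); split.
    by move=> c x y; rewrite dfl dgl; ring.
  move=> x; have [p [pe p1]] := dfp x; have [q [qe q1]] := dgp x.
  exists (p + q); split; first by move=> t; rewrite hornerD pe qe.
  by rewrite coefD p1 q1.
- move=> f g _ [df [dfl dfp]] _ [dg [dgl dgp]].
  exists (fun x => df x * g 1%:M + f 1%:M * dg x); split.
    by move=> c x y; rewrite dfl dgl; ring.
  move=> x; have [p [pe p1]] := dfp x; have [q [qe q1]] := dgp x.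
  exists (p * q); split; first by move=> t; rewrite hornerM pe qe.
  have p0 : p`_0 = f 1%:M by rewrite -horner_coef0 -pe scale0r addr0.
  have q0 : q`_0 = g 1%:M by rewrite -horner_coef0 -qe scale0r addr0.
  rewrite coefM big_ord_recr big_ord_recr big_ord0 /= add0r.
  by rewrite subnn subn0 p0 q0 p1 q1 addrC.
Qed.

Section LieH.
Variables (n : nat) (H : 'M[k]_n -> Prop).

Lemma lie_d f x : polyfun (@mx_coord k n) f -> (forall a, H a -> f a = 0) ->
  lie H x -> forall p : {poly k}, (forall t, f (1%:M + t *: x) = p.[t]) -> p`_1 = 0.
Proof.
move=> pf van lx p pe; have [q [qe q1]] := lx f pf van.
suff -> : p = q by [].
apply/eqP; rewrite -subr_eq0; apply/eqP; apply: poly_zero => t.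
by rewrite hornerD hornerN -pe qe subrr.
Qed.

Lemma lie_comb c x y : lie H x -> lie H y -> lie H (c *: x + y).
Proof.
move=> lx ly f pf van; have [d [dl dp]] := pf_deriv pf.
have [px [pxe px1]] := dp x; have [py [pye py1]] := dp y.
have dx : d x = 0 by rewrite -px1 (lie_d pf van lx pxe).
have dy : d y = 0 by rewrite -py1 (lie_d pf van ly pye).
have [p [pe p1]] := dp (c *: x + y).
by exists p; split => //; rewrite p1 dl dx dy mulr0 addr0.
Qed.

Lemma lie0 : lie H 0.
Proof.
move=> f pf van; exists (f 1%:M)%:P; split.
  by move=> t; rewrite hornerC scaler0 addr0.
by rewrite coefC.
Qed.

Lemma lie_curve x : (forall t, H (1%:M + t *: x)) -> lie H x.
Proof.
move=> hc f pf van; exists 0; split; last by rewrite coef0.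
by move=> t; rewrite horner0 van.
Qed.

Lemma lie_conj h x : h \in unitmx -> (forall a, H a -> H (invmx h *m a *m h)) ->
  lie H x -> lie H (invmx h *m x *m h).
Proof.
move=> uh hH lx f pf van.
pose f' a := f (invmx h *m a *m h).
have pf' : polyfun (@mx_coord k n) f'.
  apply: (pf_comp _ pf) => c [i [j ce]].
  by apply: (pf_eq (pf_conj (invmx h) h i j)) => a; rewrite ce.
have [p [pe p1]] := lx f' pf' (fun a Ha => van _ (hH a Ha)).
exists p; split => // t; rewrite -pe /f'.
by rewrite mulmxDr mulmxDl mulmx1 mulVmx // -scalemxAr -scalemxAl.
Qed.
End LieH.

End Lie.


Section Sp.
Variable k : closedFieldType.
Hypothesis hchar : 2%N \in [pchar k].

Lemma mx_c2 m n (M : 'M[k]_(m, n)) : - M = M.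
Proof. by apply/matrixP => i j; rewrite mxE oppr_c2. Qed.

Lemma trD m n (A B : 'M[k]_(m, n)) : (A + B)^T = A^T + B^T.
Proof. by apply/matrixP => i j; rewrite !mxE. Qed.

Lemma trZ m n c (A : 'M[k]_(m, n)) : (c *: A)^T = c *: A^T.
Proof. by apply/matrixP => i j; rewrite !mxE. Qed.

Lemma trN m n (A : 'M[k]_(m, n)) : (- A)^T = - A^T.
Proof. by apply/matrixP => i j; rewrite !mxE. Qed.

Lemma lin_sym n (phi : 'M[k]_n -> k) :
  (forall c x y, phi (c *: x + y) = c * phi x + phi y) ->
  (forall w : 'cV[k]_n, phi (w *m w^T) = 0) -> forall S, S^T = S -> phi S = 0.
Proof.
move=> hl hw S sS.
have phi0 : phi 0 = 0.
  have h := hl (-1) 0 0; rewrite scaler0 addr0 mulN1r addNr in h; exact: h.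
have phiD : {morph phi : x y / x + y >-> x + y}.
  move=> x y; have h := hl 1 x y; rewrite scale1r mul1r in h; exact: h.
have phiZ : forall c x, phi (c *: x) = c * phi x.
  move=> c x; have h := hl c x 0; rewrite addr0 phi0 addr0 in h; exact: h.
pose C := \matrix_(a, b) phi (delta_mx a b).
have phiE : forall Y, phi Y = \tr (Y *m C^T).
  move=> Y; rewrite {1}(matrix_sum_delta Y) (big_morph phi phiD phi0).
  rewrite /mxtrace; apply: eq_bigr => i _.
  rewrite (big_morph phi phiD phi0) mxE; apply: eq_bigr => j _.
  by rewrite phiZ !mxE.
rewrite phiE; apply: (tr_sym_alt hchar sS) => w.
rewrite /bf -trace_mx11 mxtrace_mulC mulmxA -phiE; exact: hw.
Qed.

Section SpJ.
Variables (n : nat) (J : 'M[k]_n).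
Hypotheses (uJ : J \in unitmx) (aJ : forall v, bf J v v = 0).

Lemma sJ : J^T = J.
Proof.
have [_ s] := alt_entries hchar aJ.
by apply/matrixP => i j; rewrite mxE s.
Qed.

Lemma Sp_mx a : Sp J a -> a^T *m J *m a = J.
Proof.
case=> _ h; apply/eqP; rewrite -subr_eq0; apply/eqP; apply: bf_eq0 => u w.
by rewrite bfBm -bf_mul; apply/eqP; rewrite subr_eq0; apply/eqP; apply: h.
Qed.

Lemma Sp_of a : a \in unitmx -> a^T *m J *m a = J -> Sp J a.
Proof. by move=> ua e; split => // v w; rewrite /bform -/(bf _ _ _) bf_mul e. Qed.

Lemma quad_exp (X : 'M[k]_n) t :
  (1%:M + t *: X)^T *m J *m (1%:M + t *: X) =
  J + t *: (X^T *m J + J *m X) + (t * t) *: (X^T *m J *m X).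
Proof.
rewrite trD trmx1 trZ !mulmxDl !mulmxDr !mul1mx !mulmx1.
rewrite -!scalemxAl -!scalemxAr !scalerA scalerDr.
by rewrite !addrA; congr (_ + _); rewrite -!addrA; congr (_ + _); rewrite addrC.
Qed.

Lemma sp_gen (w : 'cV[k]_n) t : Sp J (1%:M + t *: (invmx J *m (w *m w^T))).
Proof.
have [u eu] : exists u, u = invmx J *m w by exists (invmx J *m w).
have Ju : J *m u = w by rewrite eu mulKVmx.
have uJ' : u^T *m J = w^T by rewrite -{1}sJ -trmx_mul Ju.
have uJu : u^T *m J *m u = 0.
  by apply/matrixP => i j; rewrite !ord1 [RHS]mxE; exact: aJ.
have wu : w^T *m u = 0 by rewrite -{1}Ju trmx_mul sJ uJu.
have [N eN] : exists N, N = u *m w^T by exists (u *m w^T).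
have -> : invmx J *m (w *m w^T) = N by rewrite eN eu mulmxA.
have e1 : N^T *m J + J *m N = 0.
  rewrite eN trmx_mul trmxK -mulmxA uJ' mulmxA Ju.
  by apply/eqP; rewrite addr_eq0 mx_c2.
have e2 : N^T *m J *m N = 0.
  rewrite eN trmx_mul trmxK !mulmxA -[w *m u^T *m J]mulmxA.
  by rewrite -[w *m (u^T *m J) *m u]mulmxA uJu mulmx0 mul0mx.
apply: Sp_of; last by rewrite quad_exp e1 e2 !scaler0 !addr0.
have [] // := @mulmx1_unit _ _ (1%:M + t *: N) (1%:M + t *: N).
rewrite mulmxDl !mulmxDr !mul1mx !mulmx1 -scalemxAl -scalemxAr scalerA.
have -> : N *m N = 0.
  by rewrite eN mulmxA -[u *m w^T *m u]mulmxA wu mulmx0 mul0mx.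
rewrite scaler0 addr0 -addrA.
suff -> : t *: N + t *: N = 0 by rewrite addr0.
by apply/eqP; rewrite addr_eq0 mx_c2.
Qed.

Definition spl (x : 'M[k]_n) := x^T *m J + J *m x = 0.

Lemma lie_spl x : lie (Sp J) x -> spl x.
Proof.
move=> lx; apply/matrixP => i j.
pose f (a : 'M[k]_n) := (a^T *m J *m a) i j + (fun _ => - J i j) a.
have pf : polyfun (@mx_coord k n) f by apply: PFadd; [apply: pf_quad | apply: PFconst].
have van : forall a, Sp J a -> f a = 0 by move=> a /Sp_mx; rewrite /f => ->; rewrite subrr.
pose q := (x^T *m J + J *m x) i j *: 'X + (x^T *m J *m x) i j *: 'X^2.
have qe : forall t, f (1%:M + t *: x) = q.[t].
  move=> t; rewrite /f quad_exp /q hornerD !hornerZ hornerX hornerXn !mxE.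
  by rewrite expr2; ring.
have := lie_d pf van lx qe.
rewrite /q coefD !coefZ coefX coefXn /= mulr1 mulr0 addr0 => ->; by rewrite mxE.
Qed.

Lemma spl_lie x : spl x -> lie (Sp J) x.
Proof.
move=> sx f pf van; have [d [dl dp]] := pf_deriv pf.
pose phi (Y : 'M[k]_n) := d (invmx J *m Y).
have phil : forall c x y, phi (c *: x + y) = c * phi x + phi y.
  by move=> c x' y; rewrite /phi mulmxDr -scalemxAr dl.
have phiw : forall w : 'cV[k]_n, phi (w *m w^T) = 0.
  move=> w; rewrite /phi.
  have lw : lie (Sp J) (invmx J *m (w *m w^T)) by apply: lie_curve => t; apply: sp_gen.
  have [p [pe p1]] := dp (invmx J *m (w *m w^T)).
  by rewrite -p1 (lie_d pf van lw pe).
have sS : (J *m x)^T = J *m x.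
  rewrite trmx_mul sJ; move/eqP: sx; rewrite addr_eq0 => /eqP ->.
  by rewrite mx_c2.
have dx : d x = 0.
  by have := lin_sym phil phiw sS; rewrite /phi mulKmx.
have [p [pe p1]] := dp x.
by exists p; split => //; rewrite p1.
Qed.

Lemma Sp1 : Sp J 1%:M.
Proof. by split; [exact: unitmx1 | move=> v w; rewrite !mul1mx]. Qed.

Lemma SpM a b : Sp J a -> Sp J b -> Sp J (a *m b).
Proof.
move=> [ua ha] [ub hb]; split; first by rewrite unitmx_mul ua ub.
by move=> v w; rewrite -!mulmxA ha hb.
Qed.

Lemma SpV a : Sp J a -> Sp J (invmx a).
Proof.
move=> [ua ha]; split; first by rewrite unitmx_inv.
by move=> v w; rewrite -ha !mulmxA !mulmxV ?mul1mx.
Qed.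

End SpJ.
End Sp.


Section SpCase.
Variable k : closedFieldType.
Hypothesis hchar : 2%N \in [pchar k].


Lemma nondeg_unit n (J : 'M[k]_n) :
  (forall v, (forall w, bf J v w = 0) -> v = 0) -> J \in unitmx.
Proof.
move=> h; rewrite -row_free_unit -kermx_eq0; apply/eqP/row_matrixP => i.
rewrite row0.
have rJ : row i (kermx J) *m J = 0 by apply/sub_kermxP; exact: row_sub.
rewrite -[row i _]trmxK (h (row i (kermx J))^T) ?trmx0 // => w.
by rewrite /bf trmxK rJ mul0mx mxE.
Qed.

Variables (n1 n2 : nat) (J1 : 'M[k]_n1) (J2 : 'M[k]_n2).
Hypotheses (nd1 : symp_nondeg J1) (nd2 : symp_nondeg J2).

Let J := block_mx J1 0 0 J2.
Let uJ1 : J1 \in unitmx. Proof. by apply: nondeg_unit; case: nd1. Qed.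
Let uJ2 : J2 \in unitmx. Proof. by apply: nondeg_unit; case: nd2. Qed.
Let aJ1 : forall v, bf J1 v v = 0. Proof. by case: nd1. Qed.
Let aJ2 : forall v, bf J2 v v = 0. Proof. by case: nd2. Qed.
Let uJ : J \in unitmx. Proof. by rewrite /J block_diag_mx_unit uJ1 uJ2. Qed.
Let aJ : forall v, bf J v v = 0.
Proof. by move=> v; rewrite -[v]vsubmxK /J bf_block !bf0m aJ1 aJ2 !addr0. Qed.

Lemma Sp_block h1 h2 : Sp J1 h1 -> Sp J2 h2 -> Sp J (block_mx h1 0 0 h2).
Proof.
move=> s1 s2; apply: Sp_of.
  by rewrite block_diag_mx_unit; case: s1 => -> _; case: s2 => -> _.
rewrite tr_block_mx !trmx0 /J !mulmx_block !mulmx0 !mul0mx !addr0 !add0r.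
by rewrite !mul0mx (Sp_mx s1) (Sp_mx s2).
Qed.

Lemma spl_sub x : spl J x -> spl J1 (ulsubmx x) /\ spl J2 (drsubmx x).
Proof.
rewrite /spl -[x]submxK tr_block_mx /J !mulmx_block !mulmx0 !mul0mx !addr0 !add0r.
rewrite add_block_mx !block_mxKul !block_mxKdr => e.
have := congr1 ulsubmx e; have := congr1 drsubmx e.
by rewrite -(block_mx0 k n1 n2 n1 n2) !block_mxKul !block_mxKdr => -> ->.
Qed.

Lemma sp_key xi1 xi2 xi : sp_embed J1 J2 xi1 xi2 xi ->
  forall x, lie (Sp J) x -> xi x = xi1 (ulsubmx x) + xi2 (drsubmx x).
Proof.
move=> [X1 [X2 [X [r1 r2 r hq]]]] x lx.
have sx : spl J x by apply: lie_spl.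
have [s1 s2] := spl_sub sx.
rewrite (r x lx) (r1 _ (spl_lie hchar uJ1 aJ1 s1)) (r2 _ (spl_lie hchar uJ2 aJ2 s2)).
set Xb := block_mx X1 0 0 X2.
have eX : X = Xb + (X - Xb) by rewrite addrC subrK.
rewrite eX mulmxDl mxtraceD.
have -> : \tr (Xb *m x) = \tr (X1 *m ulsubmx x) + \tr (X2 *m drsubmx x).
  by rewrite /Xb -{1}[x]submxK mulmx_block mxtrace_block !mul0mx addr0 add0r.
suff -> : \tr ((X - Xb) *m x) = 0 by rewrite addr0.
set D := X - Xb.
have aP : forall v, bf (J *m D) v v = 0.
  move=> v; rewrite /D mulmxBr bfBm; apply/eqP; rewrite subr_eq0; apply/eqP.
  rewrite -[v]vsubmxK.
  have -> : bf (J *m X) (col_mx (usubmx v) (dsubmx v)) (col_mx (usubmx v) (dsubmx v))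
     = qform_of J X (col_mx (usubmx v) (dsubmx v)) by rewrite /qform_of /bform /bf !mulmxA.
  rewrite hq /J /Xb mulmx_block !mulmx0 !mul0mx !addr0 !add0r bf_block !bf0m !addr0.
  by rewrite /qform_of /bform /bf !mulmxA.
have eD : D = invmx J *m (J *m D) by rewrite mulKmx.
rewrite eD mxtrace_mulC mulmxA.
apply: (tr_sym_alt hchar _ aP).
have xT : x^T *m J = J *m x.
  by move/eqP: sx; rewrite addr_eq0 => /eqP ->; rewrite mx_c2.
have ex : x^T = J *m x *m invmx J by rewrite -xT mulmxK.
by rewrite trmx_mul trmx_inv (sJ hchar aJ) ex !mulmxA mulVmx // mul1mx.
Qed.

Lemma sp_case (xi1 eta1 : 'M[k]_n1 -> k) (xi2 eta2 : 'M[k]_n2 -> k)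
  (xi eta : 'M[k]_(n1 + n2) -> k) :
  orbit_le (Sp J1) (lie (Sp J1)) xi1 eta1 ->
  orbit_le (Sp J2) (lie (Sp J2)) xi2 eta2 ->
  sp_embed J1 J2 xi1 xi2 xi -> sp_embed J1 J2 eta1 eta2 eta ->
  orbit_le (Sp J) (lie (Sp J)) xi eta.
Proof.
move=> le1 le2 ex ee.
apply: (generic (G1 := Sp J1) (G2 := Sp J2) (g1 := lie (Sp J1)) (g2 := lie (Sp J2))
   (xi1 := xi1) (xi2 := xi2) (eta1 := eta1) (eta2 := eta2)) => //.
- exact: Sp1.
- by move=> a b; apply: SpM.
- by move=> a [].
- exact: Sp1.
- exact: Sp1.
- by move=> a [].
- by move=> a [].
- move=> h x Gh lx; apply: lie_conj => //; first by case: Gh.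
  by move=> a Ga; apply: SpM; [apply: SpM => //; apply: SpV|].
- exact: Sp_block.
- move=> x lx; have [s1 s2] := spl_sub (lie_spl lx).
  by split; apply: spl_lie.
- exact: sp_key.
- exact: sp_key.
Qed.
End SpCase.


Section Conn.
Variable k : closedFieldType.

Section Pull.
Variables (m n : nat) (phi : 'M[k]_m -> 'M[k]_n).
Hypothesis hphi : forall i j, polyfun (@mx_coord k m) (fun a => phi a i j).

Lemma pull_pf f : polyfun (@mx_coord k n) f ->
  polyfun (@mx_coord k m) (fun a => f (phi a)).
Proof.
apply: pf_comp => c [i [j ce]].
by apply: (pf_eq (hphi i j)) => a; rewrite ce.
Qed.

Lemma pre_closed Z : zclosed (@mx_coord k n) Z ->
  zclosed (@mx_coord k m) (fun a => Z (phi a)).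
Proof.
move=> cZ t ht; apply: cZ => f pf van.
exact: (ht (fun a => f (phi a)) (pull_pf pf) (fun s Hs => van _ Hs)).
Qed.

Lemma conn_image S : zconnected (@mx_coord k m) S ->
  zconnected (@mx_coord k n) (fun b => exists a, S a /\ b = phi a).
Proof.
move=> cS Z1 Z2 c1 c2 cov dis.
have := cS (fun a => Z1 (phi a)) (fun a => Z2 (phi a)) (pre_closed c1) (pre_closed c2).
case.
- by move=> a Sa; apply: cov; exists a.
- by move=> a Sa; apply: dis; exists a.
- by move=> h; left => b [a [Sa ->]]; apply: h.
- by move=> h; right => b [a [Sa ->]]; apply: h.
Qed.
End Pull.

Lemma conn_union n (U S : 'M[k]_n -> Prop) : zconnected (@mx_coord k n) S ->
  (forall a, S a -> U a) ->
  (forall u, U u -> exists T, [/\ zconnected (@mx_coord k n) T,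
      (forall b, T b -> U b), T u & exists s, S s /\ T s]) ->
  zconnected (@mx_coord k n) U.
Proof.
move=> cS SU hT Z1 Z2 c1 c2 cov dis.
have [h1|h2] := cS Z1 Z2 c1 c2 (fun a Sa => cov a (SU a Sa)) (fun a Sa => dis a (SU a Sa)).
- left => u Uu; have [T [cT TU Tu [s [Ss Ts]]]] := hT u Uu.
  have [t1|t2] := cT Z1 Z2 c1 c2 (fun b Tb => cov b (TU b Tb)) (fun b Tb => dis b (TU b Tb)).
    exact: t1.
  by exfalso; apply: (dis s (SU s Ss) (h1 s Ss) (t2 s Ts)).
- right => u Uu; have [T [cT TU Tu [s [Ss Ts]]]] := hT u Uu.
  have [t1|t2] := cT Z1 Z2 c1 c2 (fun b Tb => cov b (TU b Tb)) (fun b Tb => dis b (TU b Tb)).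
    by exfalso; apply: (dis s (SU s Ss) (t1 s Ts) (h2 s Ss)).
  exact: t2.
Qed.

Lemma conn_single n (a0 : 'M[k]_n) : zconnected (@mx_coord k n) (fun a => a = a0).
Proof. by move=> Z1 Z2 _ _ cov dis; case: (cov a0 erefl) => h; [left|right] => a ->. Qed.

Lemma blockl_eq n1 n2 (a : 'M[k]_n1) (c : 'M[k]_n2) :
  block_mx a 0 0 c = col_mx 1%:M 0 *m a *m row_mx 1%:M 0 + block_mx 0 0 0 c.
Proof.
rewrite mul_col_mx mul_col_row add_block_mx !mul1mx !mulmx1 !mul0mx !mulmx0.
by rewrite !addr0 !add0r.
Qed.

Lemma blockr_eq n1 n2 (c : 'M[k]_n1) (b : 'M[k]_n2) :
  block_mx c 0 0 b = col_mx 0 1%:M *m b *m row_mx 0 1%:M + block_mx c 0 0 0.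
Proof.
rewrite mul_col_mx mul_col_row add_block_mx !mul1mx !mulmx1 !mul0mx !mulmx0.
by rewrite !addr0 !add0r.
Qed.

Lemma pf_blockl n1 n2 (c : 'M[k]_n2) i j :
  polyfun (@mx_coord k n1) (fun a => (block_mx a 0 0 c) i j).
Proof.
apply: (pf_eq (f := fun a : 'M[k]_n1 =>
  (col_mx 1%:M 0 *m a *m row_mx 1%:M 0) i j + (fun _ => (block_mx 0 0 0 c) i j) a)).
  by apply: PFadd; [apply: pf_conj | apply: PFconst].
by move=> a; symmetry; rewrite (blockl_eq a c) [LHS]mxE.
Qed.

Lemma pf_blockr n1 n2 (c : 'M[k]_n1) i j :
  polyfun (@mx_coord k n2) (fun b => (block_mx c 0 0 b) i j).
Proof.
apply: (pf_eq (f := fun b : 'M[k]_n2 =>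
  (col_mx 0 1%:M *m b *m row_mx 0 1%:M) i j + (fun _ => (block_mx c 0 0 0) i j) b)).
  by apply: PFadd; [apply: pf_conj | apply: PFconst].
by move=> b; symmetry; rewrite (blockr_eq c b) [LHS]mxE.
Qed.

End Conn.

Section Orth.
Variable k : closedFieldType.
Hypothesis hchar : 2%N \in [pchar k].

Lemma Qf_bf n (A : 'M[k]_n) v : Qf A v = bf A v v.
Proof. by []. Qed.

Lemma polar_bf n (A : 'M[k]_n) v w : polar A v w = bf (A + A^T) v w.
Proof.
rewrite /polar !Qf_bf bfDl !bfDr bfDm bf_tr.
set a := bf A v v; set b := bf A v w; set c := bf A w v; set d := bf A w w.
ring.
Qed.

Lemma bf_mull m n p (M : 'M[k]_(m, n)) (a : 'M[k]_(m, p)) u w :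
  bf M (a *m u) w = bf (a^T *m M) u w.
Proof. by rewrite /bf trmx_mul !mulmxA. Qed.

Lemma bf_mulr m n p (M : 'M[k]_(m, n)) (b : 'M[k]_(n, p)) u w :
  bf M u (b *m w) = bf (M *m b) u w.
Proof. by rewrite /bf !mulmxA. Qed.

Lemma altform_bf n (A X : 'M[k]_n) v w :
  altform_of A X v w = bf (X^T *m (A + A^T) - (A + A^T) *m X) v w.
Proof. by rewrite /altform_of !polar_bf bf_mull bf_mulr bfBm. Qed.

Lemma bfr0 m n (M : 'M[k]_(m, n)) u : bf M u 0 = 0.
Proof. by rewrite /bf mulmx0 mxE. Qed.

Lemma bfl0 m n (M : 'M[k]_(m, n)) w : bf M 0 w = 0.
Proof. by rewrite /bf trmx0 !mul0mx mxE. Qed.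

Lemma polar0r n (A : 'M[k]_n) u : polar A u 0 = 0.
Proof. by rewrite polar_bf bfr0. Qed.

Lemma polar0l n (A : 'M[k]_n) u : polar A 0 u = 0.
Proof. by rewrite polar_bf bfl0. Qed.

Section OgA.
Variables (n : nat) (A : 'M[k]_n).

Lemma Og_polar h : Ogrp A h -> forall v w, polar A (h *m v) (h *m w) = polar A v w.
Proof. by case=> _ hQ v w; rewrite /polar -mulmxDr !hQ. Qed.

Lemma Og1 : Ogrp A 1%:M.
Proof. by split; [exact: unitmx1 | move=> v; rewrite mul1mx]. Qed.

Lemma OgM a b : Ogrp A a -> Ogrp A b -> Ogrp A (a *m b).
Proof.
move=> [ua ha] [ub hb]; split; first by rewrite unitmx_mul ua ub.
by move=> v; rewrite -mulmxA ha hb.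
Qed.

Lemma OgV a : Ogrp A a -> Ogrp A (invmx a).
Proof.
move=> [ua ha]; split; first by rewrite unitmx_inv.
by move=> v; rewrite -ha mulKVmx.
Qed.

Lemma olie_conj h x : Ogrp A h -> o_lie A x -> o_lie A (invmx h *m x *m h).
Proof.
move=> Oh [o1 o2]; have hp := Og_polar Oh; have hV := Og_polar (OgV Oh).
have uh : h \in unitmx by case: Oh.
split.
  move=> v; rewrite -hp.
  have -> : h *m (invmx h *m x *m h *m v) = x *m (h *m v).
    by rewrite !mulmxA mulmxV // mul1mx.
  exact: o1.
move=> v rv.
have rhv : radb A (h *m v).
  by move=> w; rewrite -[w](mulKVmx uh) hp; apply: rv.
by rewrite -!mulmxA (o2 _ rhv) mulmx0.
Qed.
End OgA.

Section Blk.
Variables (n1 n2 : nat) (A1 : 'M[k]_n1) (A2 : 'M[k]_n2).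
Let A := block_mx A1 0 0 A2.

Lemma polar_block v1 v2 w1 w2 :
  polar A (col_mx v1 v2) (col_mx w1 w2) = polar A1 v1 w1 + polar A2 v2 w2.
Proof.
rewrite !polar_bf /A tr_block_mx !trmx0 add_block_mx !addr0 ?add0r bf_block.
by rewrite !bf0m !addr0.
Qed.

Lemma Og_block h1 h2 : Ogrp A1 h1 -> Ogrp A2 h2 -> Ogrp A (block_mx h1 0 0 h2).
Proof.
move=> [u1 q1] [u2 q2]; split; first by rewrite block_diag_mx_unit u1 u2.
move=> v; rewrite -[v]vsubmxK mul_block_col !mul0mx !addr0 !add0r.
by rewrite !Qf_bf /A !bf_block !bf0m !addr0 -!Qf_bf q1 q2.
Qed.

Lemma olie_sub x : o_lie A x -> o_lie A1 (ulsubmx x) /\ o_lie A2 (drsubmx x).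
Proof.
move=> [o1 o2].
have ex1 : forall v1 : 'cV[k]_n1, x *m col_mx v1 0 = col_mx (ulsubmx x *m v1) (dlsubmx x *m v1).
  by move=> v1; rewrite -{1}[x]submxK mul_block_col !mulmx0 !addr0.
have ex2 : forall v2 : 'cV[k]_n2, x *m col_mx 0 v2 = col_mx (ursubmx x *m v2) (drsubmx x *m v2).
  by move=> v2; rewrite -{1}[x]submxK mul_block_col !mulmx0 !add0r.
split; split.
- move=> v1; have := o1 (col_mx v1 0).
  by rewrite ex1 polar_block polar0r addr0.
- move=> v1 r1.
  have r : radb A (col_mx v1 0).
    move=> w; rewrite -[w]vsubmxK polar_block r1 add0r.
    by rewrite polar0l.
  have := o2 _ r; rewrite ex1 => /(congr1 usubmx).
  by rewrite col_mxKu -(col_mx0 k n1 n2 1) col_mxKu.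
- move=> v2; have := o1 (col_mx 0 v2).
  by rewrite ex2 polar_block polar0r add0r.
- move=> v2 r2.
  have r : radb A (col_mx 0 v2).
    move=> w; rewrite -[w]vsubmxK polar_block r2 addr0.
    by rewrite polar0l.
  have := o2 _ r; rewrite ex2 => /(congr1 dsubmx).
  by rewrite col_mxKd -(col_mx0 k n1 n2 1) col_mxKd.
Qed.

End Blk.
End Orth.


Section OrCase.
Variable k : closedFieldType.
Hypothesis hchar : 2%N \in [pchar k].

Section SO.
Variables (n : nat) (A : 'M[k]_n).

Lemma SO_O h : SOgrp A h -> Ogrp A h.
Proof. by case=> S [HS _ _ Sh]; apply: HS. Qed.

Lemma SO1 : SOgrp A 1%:M.
Proof.
exists (fun a => a = 1%:M); split => //; last exact: conn_single.
by move=> b ->; apply: Og1.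
Qed.

Lemma SOM a b : SOgrp A a -> SOgrp A b -> SOgrp A (a *m b).
Proof.
move=> [S [HS cS S1 Sa]] [S' [HS' cS' S1' Sb]].
exists (fun c => exists a' b', [/\ S a', S' b' & c = a' *m b']); split.
- by move=> c [a' [b' [Sa' Sb' ->]]]; apply: OgM; [apply: HS | apply: HS'].
- apply: (conn_union cS).
    by move=> a' Sa'; exists a', 1%:M; split => //; rewrite mulmx1.
  move=> u [a' [b' [Sa' Sb' ->]]].
  exists (fun c => exists b'', S' b'' /\ c = a' *m b''); split.
  + by apply: conn_image => // i j; apply: pf_lmul.
  + by move=> c [b'' [Sb'' ->]]; exists a', b''.
  + by exists b'.
  + by exists a'; split => //; exists 1%:M; rewrite mulmx1.
- by exists 1%:M, 1%:M; rewrite mulmx1.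
- by exists a, b.
Qed.
End SO.

Section Blk.
Variables (n1 n2 : nat) (A1 : 'M[k]_n1) (A2 : 'M[k]_n2).
Let A := block_mx A1 0 0 A2.

Lemma SO_block h1 h2 : SOgrp A1 h1 -> SOgrp A2 h2 -> SOgrp A (block_mx h1 0 0 h2).
Proof.
move=> [S1 [HS1 cS1 S11 Sh1]] [S2 [HS2 cS2 S21 Sh2]].
exists (fun c => exists a b, [/\ S1 a, S2 b & c = block_mx a 0 0 b]); split.
- by move=> c [a [b [Sa Sb ->]]]; apply: Og_block; [apply: HS1 | apply: HS2].
- apply: (conn_union (S := fun c => exists a, S1 a /\ c = block_mx a 0 0 1%:M)).
  + by apply: conn_image => // i j; apply: pf_blockl.
  + by move=> c [a [Sa ->]]; exists a, 1%:M.
  move=> u [a [b [Sa Sb ->]]].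
  exists (fun c => exists b', S2 b' /\ c = block_mx a 0 0 b'); split.
  + by apply: conn_image => // i j; apply: pf_blockr.
  + by move=> c [b' [Sb' ->]]; exists a, b'.
  + by exists b.
  + by exists (block_mx a 0 0 1%:M); split; [exists a | exists 1%:M].
- by exists 1%:M, 1%:M; split => //; rewrite -scalar_mx_block.
- by exists h1, h2.
Qed.

Lemma o_key xi1 xi2 xi : o_embed A1 A2 xi1 xi2 xi ->
  forall x, o_lie A x -> xi x = xi1 (ulsubmx x) + xi2 (drsubmx x).
Proof.
move=> [X1 [X2 [X [r1 r2 r hq]]]] x ox.
have [o1 o2] := olie_sub ox.
rewrite (r x ox) (r1 _ o1) (r2 _ o2).
set Xb := block_mx X1 0 0 X2.
have eX : X = Xb + (X - Xb) by rewrite addrC subrK.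
rewrite eX mulmxDl mxtraceD.
have -> : \tr (Xb *m x) = \tr (X1 *m ulsubmx x) + \tr (X2 *m drsubmx x).
  by rewrite /Xb -{1}[x]submxK mulmx_block mxtrace_block !mul0mx addr0 add0r.
suff -> : \tr ((X - Xb) *m x) = 0 by rewrite addr0.
set D := X - Xb.
have [B eB] : exists B, B = A + A^T by exists (A + A^T).
have sB : B^T = B by rewrite eB trD trmxK addrC.
have hB : B = block_mx (A1 + A1^T) 0 0 (A2 + A2^T).
  by rewrite eB /A tr_block_mx !trmx0 add_block_mx !addr0.
have hD : B *m D = D^T *m B.
  have e : forall u w, bf (X^T *m B - B *m X) u w = bf (Xb^T *m B - B *m Xb) u w.
    move=> u w; rewrite -[u]vsubmxK -[w]vsubmxK eB -altform_bf hq !altform_bf -eB.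
    rewrite /Xb hB tr_block_mx !trmx0 !mulmx_block !mulmx0 !mul0mx !addr0 !add0r.
    by rewrite opp_block_mx add_block_mx !oppr0 !addr0 bf_block !bf0m !addr0.
  have : D^T *m B - B *m D = 0.
    apply: bf_eq0 => u w.
    have -> : D^T *m B - B *m D = (X^T *m B - B *m X) - (Xb^T *m B - B *m Xb).
      rewrite /D trD trN mulmxDl mulmxDr mulNmx mulmxN opprD opprK.
      by rewrite [in RHS]opprD opprK addrACA.
    by rewrite bfBm e subrr.
  by move/eqP; rewrite subr_eq0 => /eqP ->.
apply: (tr_o hchar sB hD).
  move=> v; rewrite -bf_mull eB -polar_bf; case: ox => ox1 _; exact: ox1.
apply/matrixP => i j.
have hc : x *m col j (cokermx B) = 0.
  case: ox => _ ox2; apply: ox2 => w.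
  rewrite polar_bf -eB -bf_tr sB /bf colE mulmxA -[w^T *m B *m _]mulmxA.
  by rewrite mulmx_coker mulmx0 mul0mx mxE.
have := congr1 (fun M : 'cV[k]_(n1+n2) => M i 0) hc; rewrite colE mulmxA -colE.
by rewrite !mxE => ->.
Qed.
Lemma or_case (xi1 eta1 : 'M[k]_n1 -> k) (xi2 eta2 : 'M[k]_n2 -> k)
  (xi eta : 'M[k]_(n1 + n2) -> k) :
  orbit_le (SOgrp A1) (o_lie A1) xi1 eta1 ->
  orbit_le (SOgrp A2) (o_lie A2) xi2 eta2 ->
  o_embed A1 A2 xi1 xi2 xi -> o_embed A1 A2 eta1 eta2 eta ->
  orbit_le (SOgrp A) (o_lie A) xi eta.
Proof.
move=> le1 le2 ex ee.
apply: (generic (G1 := SOgrp A1) (G2 := SOgrp A2) (g1 := o_lie A1) (g2 := o_lie A2)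
   (xi1 := xi1) (xi2 := xi2) (eta1 := eta1) (eta2 := eta2)) => //.
- exact: SO1.
- by move=> a b; apply: SOM.
- by move=> a /SO_O [].
- exact: SO1.
- exact: SO1.
- by move=> a /SO_O [].
- by move=> a /SO_O [].
- by move=> h x Gh ox; apply: olie_conj (SO_O Gh) ox.
- exact: SO_block.
- exact: olie_sub.
- exact: o_key.
- exact: o_key.
Qed.
End Blk.

End OrCase.


Unset Implicit Arguments.

Theorem lemma5p2 (k : closedFieldType) (hchar : 2%N \in [pchar k]) (n1 n2 : nat) :
  (* symplectic case *)
  (forall (J1 : 'M[k]_n1) (J2 : 'M[k]_n2),
    symp_nondeg J1 -> symp_nondeg J2 ->
    forall (xi1 eta1 : 'M[k]_n1 -> k) (xi2 eta2 : 'M[k]_n2 -> k)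
           (xi eta : 'M[k]_(n1 + n2) -> k),
    nilcone (Sp J1) (lie (Sp J1)) xi1 -> nilcone (Sp J1) (lie (Sp J1)) eta1 ->
    nilcone (Sp J2) (lie (Sp J2)) xi2 -> nilcone (Sp J2) (lie (Sp J2)) eta2 ->
    orbit_le (Sp J1) (lie (Sp J1)) xi1 eta1 ->
    orbit_le (Sp J2) (lie (Sp J2)) xi2 eta2 ->
    sp_embed J1 J2 xi1 xi2 xi -> sp_embed J1 J2 eta1 eta2 eta ->
    orbit_le (Sp (block_mx J1 0 0 J2)) (lie (Sp (block_mx J1 0 0 J2))) xi eta)
  /\
  (* orthogonal case *)
  (forall (A1 : 'M[k]_n1) (A2 : 'M[k]_n2),
    quad_nondeg A1 -> quad_nondeg A2 ->
    forall (xi1 eta1 : 'M[k]_n1 -> k) (xi2 eta2 : 'M[k]_n2 -> k)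
           (xi eta : 'M[k]_(n1 + n2) -> k),
    nilcone (SOgrp A1) (o_lie A1) xi1 -> nilcone (SOgrp A1) (o_lie A1) eta1 ->
    nilcone (SOgrp A2) (o_lie A2) xi2 -> nilcone (SOgrp A2) (o_lie A2) eta2 ->
    orbit_le (SOgrp A1) (o_lie A1) xi1 eta1 ->
    orbit_le (SOgrp A2) (o_lie A2) xi2 eta2 ->
    o_embed A1 A2 xi1 xi2 xi -> o_embed A1 A2 eta1 eta2 eta ->
    orbit_le (SOgrp (block_mx A1 0 0 A2)) (o_lie (block_mx A1 0 0 A2)) xi eta).
Proof.
split.
- move=> J1 J2 nd1 nd2 xi1 eta1 xi2 eta2 xi eta _ _ _ _.
  exact: (sp_case hchar nd1 nd2).
- move=> A1 A2 _ _ xi1 eta1 xi2 eta2 xi eta _ _ _ _.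
  exact: (or_case hchar).
Qed.
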